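(* For every algebra $A$ (not necessarily unital or commutative) we have $\mathfrak{P}^{\mathrm{nc}}(A)=0$.
   Context: Fix a field $\mathbb{F}$; algebras are associative $\mathbb{F}$-algebras, not necessarily unital or commutative. For an algebra $A$, $\mathfrak{P}^{\mathrm{nc}}(A)$ is the set of $a\in A$ such that for every algebra $C$ and every algebra morphism $\varphi:A\to C[x]$, $\varphi(a)$ is a constant polynomial (lies in $C\subseteq C[x]$). (The paper defines it via a universal pro-algebra $\mathfrak{M}^{\mathrm{nc}}_{A,\mathbb{F}[x]}$ and proves it equals this set.) *)

(* Defs.v *)
From mathcomp Require Import all_boot all_order all_algebra.
Set Implicit Arguments. Unset Strict Implicit. Unset Printing Implicit Defensive.
Import GRing.Theory.
Local Open Scope ring_scope.

Record ncalg (F : fieldType) := NCAlg {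
  ncalg_car :> lmodType F;
  ncmul : ncalg_car -> ncalg_car -> ncalg_car;
  ncmulA : associative ncmul;
  ncmulDl : forall x y z, ncmul (x + y) z = ncmul x z + ncmul y z;
  ncmulDr : forall x y z, ncmul x (y + z) = ncmul x y + ncmul x z;
  ncmulZl : forall (k : F) x y, ncmul (k *: x) y = k *: ncmul x y;
  ncmulZr : forall (k : F) x y, ncmul x (k *: y) = k *: ncmul x y
}.

(* Elements of C[x] are represented by their coefficient sequences
   p : nat -> C (p n = coefficient of x^n) with finite support. *)
Definition finsupp (F : fieldType) (C : ncalg F) (p : nat -> C) : Prop :=
  exists N : nat, forall n, (N <= n)%N -> p n = 0.

Definition polymul (F : fieldType) (C : ncalg F) (p q : nat -> C) : nat -> C :=
  fun n => \sum_(i < n.+1) ncmul (p i) (q (n - i)%N).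

Definition is_alg_morph_to_poly (F : fieldType) (A C : ncalg F)
    (phi : A -> nat -> C) : Prop :=
  [/\ forall a, finsupp (phi a),
      forall a b n, phi (a + b) n = phi a n + phi b n,
      forall (k : F) a n, phi (k *: a) n = k *: phi a n &
      forall a b n, phi (ncmul a b) n = polymul (phi a) (phi b) n].

Definition is_const_poly (F : fieldType) (C : ncalg F) (p : nat -> C) : Prop :=
  forall n, (0 < n)%N -> p n = 0.

Definition Pnc (F : fieldType) (A : ncalg F) (a : A) : Prop :=
  forall (C : ncalg F) (phi : A -> nat -> C),
    is_alg_morph_to_poly phi -> is_const_poly (phi a).

(* Main.v *)
Require Import Defs.
From mathcomp Require Import all_boot all_order all_algebra.
Local Open Scope ring_scope.
Import GRing.Theory.

Section Aux.
Variables (F : fieldType) (A : ncalg F).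

Lemma ncmul0l (y : A) : ncmul 0 y = 0.
Proof. by have := ncmulZl (0 : F) (0 : A) y; rewrite !scale0r. Qed.

Lemma ncmul0r (y : A) : ncmul y 0 = 0.
Proof. by have := ncmulZr (0 : F) y (0 : A); rewrite !scale0r. Qed.

Definition P2 : lmodType F := (A * A)%type.

Lemma pairD (a b c d : A) : ((a, b) : P2) + (c, d) = (a + c, b + d).
Proof. by []. Qed.
Lemma pairZ (k : F) (a b : A) : k *: ((a, b) : P2) = (k *: a, k *: b).
Proof. by []. Qed.

Definition pmul (p q : P2) : P2 := (ncmul p.1 q.1, ncmul p.1 q.2).

Lemma pmulA : associative pmul.
Proof. by move=> [a b] [c d] [e f]; rewrite /pmul /= !ncmulA. Qed.
Lemma pmulDl x y z : pmul (x + y) z = pmul x z + pmul y z.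
Proof. by case: x y z => [a b] [c d] [e f]; rewrite /pmul /= !ncmulDl. Qed.
Lemma pmulDr x y z : pmul x (y + z) = pmul x y + pmul x z.
Proof. by case: x y z => [a b] [c d] [e f]; rewrite /pmul /= !ncmulDr. Qed.
Lemma pmulZl (k : F) x y : pmul (k *: x) y = k *: pmul x y.
Proof. by case: x y => [a b] [c d]; rewrite /pmul /= !ncmulZl. Qed.
Lemma pmulZr (k : F) x y : pmul x (k *: y) = k *: pmul x y.
Proof. by case: x y => [a b] [c d]; rewrite /pmul /= !ncmulZr. Qed.

Definition CA : ncalg F := NCAlg pmulA pmulDl pmulDr pmulZl pmulZr.

Definition phi (a : A) (n : nat) : CA :=
  ((if n == 0%N then a else 0), (if n == 1%N then a else 0)).

Lemma phi_morph : is_alg_morph_to_poly phi.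
Proof.
split.
- by move=> a; exists 2%N; case=> [|[|n]].
- by move=> a b [|[|n]]; rewrite /phi /= pairD ?addr0.
- by move=> k a [|[|n]]; rewrite /phi /= pairZ ?scaler0.
- move=> a b n; rewrite /polymul big_ord_recl /= subn0 big1 ?addr0.
    rewrite /phi /pmul /=; case: n => [|[|n]] /=.
  - by rewrite ncmul0r.
  - by rewrite ncmul0r.
  - by rewrite ncmul0r.
  move=> i _; rewrite /phi /= /pmul /= !ncmul0l; by [].
Qed.

End Aux.

Theorem mainTheorem9 (F : fieldType) (A : ncalg F) (a : A) :
  Pnc a <-> a = 0.
Proof.
split.
- move=> H; have := H _ _ (@phi_morph F A) 1%N erefl.
  by rewrite /phi /= => -[].
- move=> -> C f [_ fD _ _] n _.
  have := fD 0 0 n; rewrite addr0 => /(congr1 (fun x => x - f 0 n)).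
  by rewrite subrr addrK.
Qed.
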